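(* Let $c_1,\dots,c_m:\{1,\dots,n\}\to\mathbb{R}$ be cost functions and $n$ a positive integer. For each $t\in\{1,\dots,m\}$ let $(f^*_t,\rho^*_t)$ be an optimal solution of the linear program $$\max_{f\in\mathbb{R}^n,\ \rho\in\mathbb{R}}\ \rho\quad\text{s.t.}\quad c_t(y)-\rho\,c_t(x)+(x-z)f(x)-(y-z)f(x+1)\ge0\quad\forall (x,y,z)\in\mathcal{I}_{\mathcal{R}},$$ where $f\in\mathbb{R}^n$ is viewed as a function $f:\{1,\dots,n\}\to\mathbb{R}$ and $c_t(0)=f(0)=f(n+1)=0$. Then $\mathbf{f}_{\mathrm{OPT}}=\{f^*_1,\dots,f^*_m\}$ is an optimal set of distribution rules, i.e. $\mathbf{f}_{\mathrm{OPT}}\in\arg\min_{\mathbf{f}=(f_1,\dots,f_m)\in\mathbb{R}^{n\times m}_{\ge0}}\mathrm{PoA}(\mathcal{G}^n_{\{(c_t,f_t)\}_{t=1}^m})$, and for the set of types $T^*=\{(c_t,f^*_t)\}_{t=1}^m$, $$\mathrm{PoA}(\mathcal{G}^n_{T^*})=\max_{t\in\{1,\dots,m\}}\frac{1}{\rho^*_t}.$$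
   Context: For a positive integer $n$ and a finite set of resource types $T=\{(c_1,f_1),\dots,(c_m,f_m)\}$ with $c_t,f_t:\{1,\dots,n\}\to\mathbb{R}$ and $c_t(0)=0$, the class $\mathcal{G}_T^n$ consists of all local resource allocation games: agent set $N=\{1,\dots,n\}$; a finite set of resources $\mathcal{R}$; for each $r\in\mathcal{R}$ a value $v_r\ge0$ and a type $(c,f)\in T$, giving $c_r=v_rc$, $f_r=v_rf$ (the $f_t$ are called distribution rules); action sets $\mathcal{A}_i\subseteq2^{\mathcal{R}}$, $\mathcal{A}=\mathcal{A}_1\times\dots\times\mathcal{A}_n$. For $a\in\mathcal{A}$, $|a|_r$ is the number of agents $i$ with $r\in a_i$; $C(a)=\sum_rc_r(|a|_r)$ and $J_i(a)=\sum_{r\in a_i}f_r(|a|_r)$. A Nash equilibrium is $a^{ne}$ with $J_i(a^{ne})\le J_i(a_i,a^{ne}_{-i})$ for all $a_i\in\mathcal{A}_i$, $i\in N$; $\mathrm{PoA}(G)=\max_{a\in\mathrm{NE}(G)}C(a)/\min_{a\in\mathcal{A}}C(a)$ and $\mathrm{PoA}(\mathcal{G}_T^n)=\sup_{G\in\mathcal{G}_T^n}\mathrm{PoA}(G)$. With $\mathbb{N}=\{0,1,2,\dots\}$: $\mathcal{I}=\{(x,y,z)\in\mathbb{N}^3:1\le x+y-z\le n,\ z\le\min\{x,y\}\}$, $\mathcal{I}_{\mathcal{R}}=\{(x,y,z)\in\mathcal{I}:x+y-z=n\text{ or }(x-z)(y-z)z=0\}$. *)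

(* Defs.v *)
From HB Require Import structures.
From mathcomp Require Import all_boot all_order all_algebra.
From mathcomp Require Import boolp classical_sets constructive_ereal ereal reals.
Set Implicit Arguments. Unset Strict Implicit. Unset Printing Implicit Defensive.
Import Order.TTheory GRing.Theory Num.Theory.
Local Open Scope ring_scope.

Section LRAG.
Variables (R : realType) (n m : nat).

Record lrag := LRAG {
  res : finType;
  val : res -> R;
  ty : res -> 'I_m;
  acts : 'I_n -> {set {set res}};
  val_ge0 : forall r, 0 <= val r;
  acts_nonempty : forall i, exists A, A \in acts i
}.

Variable G : lrag.

Definition profile := {ffun 'I_n -> {set res G}}.

Definition feasible (a : profile) : bool := [forall i, a i \in acts G i].

Definition load (a : profile) (r : res G) : nat := #|[pred i : 'I_n | r \in a i]|.

Definition cost (c : 'I_m -> nat -> R) (a : profile) : R :=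
  \sum_(r : res G) val r * c (ty r) (load a r).

Definition agent_cost (f : 'I_m -> nat -> R) (i : 'I_n) (a : profile) : R :=
  \sum_(r in a i) val r * f (ty r) (load a r).

Definition deviate (a : profile) (i : 'I_n) (ai : {set res G}) : profile :=
  [ffun j => if j == i then ai else a j].

Definition is_NE (f : 'I_m -> nat -> R) (a : profile) : Prop :=
  feasible a /\
  forall i (ai : {set res G}), ai \in acts G i ->
    agent_cost f i a <= agent_cost f i (deviate a i ai).

Definition opt_cost (c : 'I_m -> nat -> R) : \bar R :=
  ereal_inf [set (cost c a)%:E | a in [set a : profile | feasible a]].

(* PoA(G) = max_{a in NE(G)} C(a) / min_a C(a), computed in the extended reals
   (x / 0 = +oo for x > 0). *)
Definition PoA_game (c f : 'I_m -> nat -> R) : \bar R :=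
  ereal_sup [set ((cost c a)%:E / opt_cost c)%E | a in [set a | is_NE f a]].

End LRAG.

Definition PoA_class (R : realType) (n m : nat) (c f : 'I_m -> nat -> R) : \bar R :=
  ereal_sup [set y | exists G : lrag R n m, y = PoA_game G c f].

Definition fext (R : realType) (n : nat) (f : nat -> R) (k : nat) : R :=
  if (1 <= k <= n)%N then f k else 0.

Definition in_IR (n x y z : nat) : bool :=
  [&& (1 <= x + y - z)%N, (x + y - z <= n)%N, (z <= minn x y)%N &
      ((x + y - z == n)%N || ((x - z) * (y - z) * z == 0)%N)].

Definition LP_feasible (R : realType) (n : nat) (ct : nat -> R) (f : nat -> R) (rho : R) : Prop :=
  forall x y z : nat, in_IR n x y z ->
    0 <= ct y - rho * ct x + (x%:R - z%:R) * fext n f x - (y%:R - z%:R) * fext n f x.+1.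

Definition LP_optimal (R : realType) (n : nat) (ct : nat -> R) (f : nat -> R) (rho : R) : Prop :=
  LP_feasible n ct f rho /\
  forall (f' : nat -> R) (rho' : R), LP_feasible n ct f' rho' -> rho' <= rho.

(* Main.v *)
Require Import Defs.
From HB Require Import structures.
From mathcomp Require Import all_boot all_order all_algebra.
From mathcomp Require Import boolp classical_sets constructive_ereal ereal reals.
From mathcomp Require Import zify ring lra.
Import Order.TTheory GRing.Theory Num.Theory.
Local Open Scope ring_scope.
Set Implicit Arguments. Unset Strict Implicit. Unset Printing Implicit Defensive.
Definition gLP (R : realType) (n : nat) (ct F : nat -> R) (rho : R) (x y z : nat) : R :=
  ct y - rho * ct x + (x%:R - z%:R) * fext n F x - (y%:R - z%:R) * fext n F x.+1.

Lemma LP_I (R : realType) (n : nat) (ct F : nat -> R) (rho : R) :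
  LP_feasible n ct F rho -> forall x y z : nat,
  (1 <= x + y - z)%N -> (x + y - z <= n)%N -> (z <= minn x y)%N ->
  0 <= gLP n ct F rho x y z.
Proof.
move=> H x y z h1 h2 h3.
set lo := (x + y - n)%N; set hi := minn x y.
have Hlo : 0 <= gLP n ct F rho x y lo.
  apply: H; rewrite /in_IR /lo; apply/and4P; split; lia.
have Hhi : 0 <= gLP n ct F rho x y hi.
  apply: H; rewrite /in_IR /hi; apply/and4P; split; lia.
have Hz1 : (lo <= z)%N by rewrite /lo; lia.
have Hz2 : (z <= hi)%N by [].
have E : (hi%:R - lo%:R) * gLP n ct F rho x y z =
   (hi%:R - z%:R) * gLP n ct F rho x y lo + (z%:R - lo%:R) * gLP n ct F rho x y hi :> R.
  rewrite /gLP; ring.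
have [eq|ne] := eqVneq hi lo.
  have -> : z = lo by apply/eqP; rewrite eqn_leq Hz1 -eq Hz2.
  exact: Hlo.
have Hl : (lo%:R : R) < hi%:R by rewrite ltr_nat ltn_neqAle eq_sym ne /=; exact: leq_trans Hz1 Hz2.
have Hzl : (lo%:R : R) <= z%:R by rewrite ler_nat.
have Hzh : (z%:R : R) <= hi%:R by rewrite ler_nat.
have : 0 <= (hi%:R - lo%:R) * gLP n ct F rho x y z.
  rewrite E; apply: addr_ge0; apply: mulr_ge0; lra.
rewrite pmulr_rge0 //; lra.
Qed.
Lemma farkas2 (R : realType) (K : finType) (P : pred K) (a D : K -> R) :
  (forall k1 k2 (t1 t2 : R), P k1 -> P k2 -> 0 <= t1 -> 0 <= t2 ->
     0 <= t1 * D k1 + t2 * D k2 -> 0 <= t1 * a k1 + t2 * a k2) ->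
  exists mu, 0 <= mu /\ forall k, P k -> 0 <= a k - mu * D k.
Proof.
move=> H.
have Hs : forall k, P k -> 0 <= D k -> 0 <= a k.
  move=> k Pk Dk; have := H k k 1 0 Pk Pk ler01 (lexx 0); rewrite !mul0r !addr0 !mul1r; exact.
set M := \big[Order.max/0]_(k | P k && (D k < 0)) (a k / D k).
set mu := \big[Order.min/M]_(k | P k && (0 < D k)) (a k / D k).
have M0 : 0 <= M by exact: bigmax_ge_id.
exists mu; split.
  apply: le_bigmin => // k /andP[Pk Dk]; apply: divr_ge0; [exact: Hs (ltW Dk)|exact: ltW].
move=> k Pk.
have [Dk|Dk|Dk] := ltrgtP (D k) 0.
- have Dk' : 0 < - D k by rewrite oppr_gt0.
  have : a k / D k <= mu.
    apply: le_bigmin => [|j /andP[Pj Dj]].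
      by apply: (bigmax_sup k); rewrite ?Pk ?Dk.
    have h := H k j (D j) (- D k) Pk Pj (ltW Dj) (ltW Dk').
    set u := a k / D k; set v := a j / D j.
    have eu : a k = u * D k by rewrite /u divfK // lt_eqF.
    have ev : a j = v * D j by rewrite /v divfK // gt_eqF.
    have : 0 <= D j * a k + - D k * a j by apply: h; rewrite mulrC mulNr subrr.
    rewrite eu ev => hh.
    have p : D k * D j < 0 by rewrite pmulr_llt0.
    have : 0 <= (D k * D j) * (u - v).
      by suff -> : (D k * D j) * (u - v) = D j * (u * D k) + - D k * (v * D j) by []; ring.
    rewrite nmulr_rge0 // subr_le0; exact.
  set u := a k / D k => hu.
  have eu : a k = u * D k by rewrite /u divfK // lt_eqF.
  rewrite eu; nra.
- have : mu <= a k / D k by apply: bigmin_le_cond; rewrite Pk Dk.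
  set u := a k / D k => hu.
  have eu : a k = u * D k by rewrite /u divfK // gt_eqF.
  rewrite eu; nra.
- by rewrite Dk mulr0 subr0; apply: Hs; rewrite ?Dk.
Qed.
Lemma card_lt (N h : nat) : (h <= N)%N -> #|[pred k : 'I_N | (k < h)%N]| = h.
Proof.
move=> hN.
have -> : #|[pred k : 'I_N | (k < h)%N]| = #|(widen_ord hN) @: [set: 'I_h]|.
  apply: eq_card => k; rewrite !inE; apply/idP/imsetP => [kh|[j _ ->]] /=.
    by exists (Ordinal kh); rewrite ?inE //; apply: ord_inj.
  exact: ltn_ord.
have inj : injective (widen_ord hN) by move=> a b /(congr1 (@nat_of_ord N)) /= /ord_inj.
by rewrite (card_imset _ inj) cardsT card_ord.
Qed.

Lemma card_range (N lo hi : nat) : (hi <= N)%N ->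
  #|[pred k : 'I_N | (lo <= k < hi)%N]| = (hi - lo)%N.
Proof.
move=> hN.
have E : #|[pred k : 'I_N | (k < hi)%N]| =
   #|[pred k : 'I_N | (lo <= k < hi)%N]| + #|[pred k : 'I_N | (k < minn lo hi)%N]|.
  rewrite -(cardID [pred k : 'I_N | (k < lo)%N] [pred k : 'I_N | (k < hi)%N]) addnC.
  congr (_ + _)%N; apply: eq_card => k; rewrite !inE /=; lia.
move: E; rewrite !card_lt //; [lia| exact: leq_trans (geq_minr _ _) hN].
Qed.

Lemma card_shift (N : nat) (f : 'I_N -> 'I_N) (Q : pred nat) : injective f ->
  #|[pred i | Q (f i)]| = #|[pred k : 'I_N | Q k]|.
Proof.
move=> inj; have := card_preimset [set k : 'I_N | Q k] inj.
have -> : #|f @^-1: [set k : 'I_N | Q k]| = #|[pred i | Q (f i)]| by apply: eq_card => i; rewrite !inE.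
by move=> ->; apply: eq_card => k; rewrite !inE.
Qed.

Definition dd (N : nat) (i j : 'I_N.+1) : nat := nat_of_ord (i - j)%R.

Lemma dd_inj1 N (j : 'I_N.+1) : injective (fun i => (i - j)%R).
Proof. by move=> a b /addIr. Qed.
Lemma dd_inj2 N (i : 'I_N.+1) : injective (fun j => (i - j)%R).
Proof. by move=> a b /addrI /oppr_inj. Qed.

Lemma sum_pairs (R : realType) N (i : 'I_N.+1) (Q : bool -> nat -> bool) (F : bool -> R) :
  \sum_(r : bool * 'I_N.+1 | Q r.1 (dd i r.2)) F r.1 =
  \sum_b F b *+ #|[pred k : 'I_N.+1 | Q b k]|.
Proof.
rewrite big_mkcond -(pair_big xpredT xpredT (fun b j => if Q b (dd i j) then F b else 0)) /=.
apply: eq_bigr => b _; rewrite -big_mkcond sumr_const.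
congr (_ *+ _); exact: (card_shift (fun k => Q b k) (@dd_inj2 N i)).
Qed.

Definition Aset N (X : bool -> nat) (i : 'I_N.+1) : {set bool * 'I_N.+1} :=
  [set r | (dd i r.2 < X r.1)%N].
Definition Bset N (X Y Z : bool -> nat) (i : 'I_N.+1) : {set bool * 'I_N.+1} :=
  [set r | (X r.1 - Z r.1 <= dd i r.2 < X r.1 + Y r.1 - Z r.1)%N].

Definition game (R : realType) N m (t : 'I_m) (th : bool -> R)
  (th0 : forall b, 0 <= th b) (X Y Z : bool -> nat) : lrag R N.+1 m :=
  @LRAG R N.+1 m (bool * 'I_N.+1)%type (fun r => th r.1) (fun _ => t)
    (fun i => [set Aset X i; Bset X Y Z i]) (fun r => th0 r.1)
    (fun i => ex_intro _ (Aset X i) (set21 _ _)).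
Arguments game {R N m} t {th} th0 X Y Z.

Lemma loadA (R : realType) N m (t : 'I_m) (th : bool -> R) (th0 : forall b, 0 <= th b) (X Y Z : bool -> nat)
  (HX : forall b, (X b <= N.+1)%N) r :
  load (G := @game R N m t th th0 X Y Z) [ffun i => Aset X i] r = X r.1.
Proof.
rewrite /load.
rewrite -(card_lt (HX r.1)) -(card_shift (fun k => k < X r.1)%N (@dd_inj1 N r.2)).
by apply: eq_card => i; rewrite !inE ffunE inE.
Qed.

Lemma loadB (R : realType) N m (t : 'I_m) (th : bool -> R) (th0 : forall b, 0 <= th b) (X Y Z : bool -> nat)
  (HZ : forall b, (Z b <= minn (X b) (Y b))%N) (HN : forall b, (X b + Y b - Z b <= N.+1)%N) r :
  load (G := @game R N m t th th0 X Y Z) [ffun i => Bset X Y Z i] r = Y r.1.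
Proof.
rewrite /load.
have := card_range (X r.1 - Z r.1) (HN r.1).
rewrite -(card_shift (fun k => X r.1 - Z r.1 <= k < X r.1 + Y r.1 - Z r.1)%N (@dd_inj1 N r.2)).
have -> : (X r.1 + Y r.1 - Z r.1 - (X r.1 - Z r.1) = Y r.1)%N by have := HZ r.1; lia.
by move=> <-; apply: eq_card => i; rewrite !inE ffunE inE.
Qed.

Lemma load_dev (R : realType) N m (t : 'I_m) (th : bool -> R) (th0 : forall b, 0 <= th b) (X Y Z : bool -> nat)
  (HX : forall b, (X b <= N.+1)%N) i r : r \in Bset X Y Z i ->
  load (G := @game R N m t th th0 X Y Z) (deviate (G := @game R N m t th th0 X Y Z) [ffun i => Aset X i] i (Bset X Y Z i)) r
  = if r \in Aset X i then X r.1 else (X r.1).+1.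
Proof.
move=> rB.
have := @loadA R N m t th th0 X Y Z HX r; rewrite /load (cardD1 i) => E.
rewrite (cardD1 i) !inE ffunE eqxx rB /=.
have -> : #|[predD1 [pred i0 | r \in deviate (G := @game R N m t th th0 X Y Z) [ffun i1 => Aset X i1] i (Bset X Y Z i) i0] & i]|
   = #|[predD1 [pred i0 | r \in [ffun i1 => Aset X i1] i0] & i]|.
  apply: eq_card => j; rewrite !inE !ffunE; case: (j =P i) => //= _; by rewrite ffunE.
move: E; rewrite !inE ffunE /Aset inE; case: (dd i r.2 < X r.1)%N => /=. all: by move=> <-.
Qed.

Lemma sum_pair_const (R : realType) N (F : bool -> R) :
  \sum_(r : bool * 'I_N.+1) F r.1 = (\sum_b F b) *+ N.+1.
Proof.
rewrite -(pair_big xpredT xpredT (fun b (j : 'I_N.+1) => F b)) /= -sumrMnl.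
by apply: eq_bigr => b _; rewrite sumr_const card_ord.
Qed.

Lemma costA (R : realType) N m (c : 'I_m -> nat -> R) (t : 'I_m) (th : bool -> R)
  (th0 : forall b, 0 <= th b) (X Y Z : bool -> nat) (HX : forall b, (X b <= N.+1)%N) :
  cost (G := @game R N m t th th0 X Y Z) c [ffun i => Aset X i] = (\sum_b th b * c t (X b)) *+ N.+1.
Proof.
rewrite /cost -sum_pair_const; apply: eq_bigr => r _.
by rewrite (@loadA R N m t th th0 X Y Z HX r).
Qed.

Lemma costB (R : realType) N m (c : 'I_m -> nat -> R) (t : 'I_m) (th : bool -> R)
  (th0 : forall b, 0 <= th b) (X Y Z : bool -> nat)
  (HZ : forall b, (Z b <= minn (X b) (Y b))%N) (HN : forall b, (X b + Y b - Z b <= N.+1)%N) :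
  cost (G := @game R N m t th th0 X Y Z) c [ffun i => Bset X Y Z i] = (\sum_b th b * c t (Y b)) *+ N.+1.
Proof.
rewrite /cost -sum_pair_const; apply: eq_bigr => r _.
by rewrite (@loadB R N m t th th0 X Y Z HZ HN r).
Qed.

Lemma JA (R : realType) N m (f : 'I_m -> nat -> R) (t : 'I_m) (th : bool -> R)
  (th0 : forall b, 0 <= th b) (X Y Z : bool -> nat) (HX : forall b, (X b <= N.+1)%N) i :
  agent_cost (G := @game R N m t th th0 X Y Z) f i [ffun i => Aset X i] =
  \sum_b (th b * f t (X b)) *+ X b.
Proof.
rewrite /agent_cost ffunE.
rewrite (eq_bigr (fun r : bool * 'I_N.+1 => th r.1 * f t (X r.1))); last first.
  by move=> r _; rewrite (@loadA R N m t th th0 X Y Z HX r).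
rewrite (eq_bigl (fun r : bool * 'I_N.+1 => (fun b k => k < X b)%N r.1 (dd i r.2))); last first.
  by move=> r; rewrite inE.
etransitivity; first exact: (sum_pairs i (fun b k => (k < X b)%N) (fun b => th b * f t (X b))).
apply: eq_bigr => b _; by rewrite card_lt.
Qed.

Lemma JB (R : realType) N m (f : 'I_m -> nat -> R) (t : 'I_m) (th : bool -> R)
  (th0 : forall b, 0 <= th b) (X Y Z : bool -> nat)
  (HZ : forall b, (Z b <= minn (X b) (Y b))%N) (HN : forall b, (X b + Y b - Z b <= N.+1)%N) i :
  agent_cost (G := @game R N m t th th0 X Y Z) f i
     (deviate (G := @game R N m t th th0 X Y Z) [ffun i => Aset X i] i (Bset X Y Z i)) =
  \sum_b ((th b * f t (X b)) *+ Z b + (th b * f t (X b).+1) *+ (Y b - Z b)).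
Proof.
have HX : forall b, (X b <= N.+1)%N by move=> b; have := HZ b; have := HN b; lia.
rewrite /agent_cost ffunE eqxx.
rewrite (bigID (fun r => r \in Aset X i)) /= big_split /=.
congr (_ + _).
  rewrite (eq_bigr (fun r : bool * 'I_N.+1 => th r.1 * f t (X r.1))); last first.
    by move=> r /andP[rB rA]; rewrite (@load_dev R N m t th th0 X Y Z HX i r rB) rA.
  rewrite (eq_bigl (fun r : bool * 'I_N.+1 => (fun b k => X b - Z b <= k < X b)%N r.1 (dd i r.2))); last first.
    move=> r; rewrite !inE /=; have := HZ r.1; lia.
  etransitivity; first exact: (sum_pairs i (fun b k => X b - Z b <= k < X b)%N (fun b => th b * f t (X b))).
  apply: eq_bigr => b _; rewrite card_range //; congr (_ *+ _); have := HZ b; lia.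
rewrite (eq_bigr (fun r : bool * 'I_N.+1 => th r.1 * f t (X r.1).+1)); last first.
  by move=> r /andP[rB /negbTE rA]; rewrite (@load_dev R N m t th th0 X Y Z HX i r rB) rA.
rewrite (eq_bigl (fun r : bool * 'I_N.+1 => (fun b k => X b <= k < X b + Y b - Z b)%N r.1 (dd i r.2))); last first.
  move=> r; rewrite !inE /=; have := HZ r.1; lia.
etransitivity; first exact: (sum_pairs i (fun b k => X b <= k < X b + Y b - Z b)%N (fun b => th b * f t (X b).+1)).
apply: eq_bigr => b _; rewrite card_range //; congr (_ *+ _); have := HZ b; lia.
Qed.

Lemma termwise (R : realType) N (F : nat -> R) (th : R) (x y z : nat) :
  (z <= minn x y)%N -> (x + y - z <= N.+1)%N ->
  (th * F x) *+ z + (th * F x.+1) *+ (y - z) - (th * F x) *+ x =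
  th * ((y%:R - z%:R) * fext N.+1 F x.+1 - (x%:R - z%:R) * fext N.+1 F x).
Proof.
move=> hz hn.
have e1 : forall k : nat, (k <= x)%N -> (th * F x) *+ k = th * (k%:R * fext N.+1 F x).
  move=> k hk; rewrite -mulr_natr; case: k hk => [|k] hk; first by rewrite !mulr0 mul0r mulr0.
  by rewrite /fext ifT; [ring | apply/andP; split; lia].
have e2 : (th * F x.+1) *+ (y - z) = th * ((y%:R - z%:R) * fext N.+1 F x.+1).
  rewrite -mulr_natr -natrB; last by lia.
  case E: (y - z)%N => [|k]; first by rewrite !mulr0 mul0r mulr0.
  by rewrite /fext ifT; [ring | apply/andP; split; lia].
rewrite e1 ?e2 ?e1; try lia.
ring.
Qed.

Lemma game_NE (R : realType) N m (f : 'I_m -> nat -> R) (t : 'I_m) (th : bool -> R)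
  (th0 : forall b, 0 <= th b) (X Y Z : bool -> nat)
  (HZ : forall b, (Z b <= minn (X b) (Y b))%N) (HN : forall b, (X b + Y b - Z b <= N.+1)%N) :
  0 <= \sum_b th b * (((Y b)%:R - (Z b)%:R) * fext N.+1 (f t) (X b).+1
                     - ((X b)%:R - (Z b)%:R) * fext N.+1 (f t) (X b)) ->
  is_NE (G := @game R N m t th th0 X Y Z) f [ffun i => Aset X i].
Proof.
move=> Hs.
have HX : forall b, (X b <= N.+1)%N by move=> b; have := HZ b; have := HN b; lia.
split.
  by apply/forallP => i; rewrite ffunE /= set21.
move=> i ai /set2P [->|->].
  have -> : deviate (G := @game R N m t th th0 X Y Z) [ffun i => Aset X i] i (Aset X i) = [ffun i => Aset X i].
    by apply/ffunP => j; rewrite !ffunE; case: (j =P i) => [->|].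
  exact: lexx.
rewrite -subr_ge0 JB // JA // -sumrB.
suff -> : \sum_b ((th b * f t (X b)) *+ Z b + (th b * f t (X b).+1) *+ (Y b - Z b) - (th b * f t (X b)) *+ X b)
   = \sum_b th b * (((Y b)%:R - (Z b)%:R) * fext N.+1 (f t) (X b).+1
                     - ((X b)%:R - (Z b)%:R) * fext N.+1 (f t) (X b)) by [].
by apply: eq_bigr => b _; apply: termwise.
Qed.

Lemma cost_ge0 (R : realType) n m (G : lrag R n m) (c : 'I_m -> nat -> R)
  (Hc : forall t k, (k <= n)%N -> 0 <= c t k) (a : profile G) : 0 <= cost c a.
Proof.
apply: sumr_ge0 => r _; apply: mulr_ge0; first exact: val_ge0.
apply: Hc; rewrite /load; apply: leq_trans (max_card _) _; by rewrite card_ord.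
Qed.

Lemma opt_cost_bounds (R : realType) n m (G : lrag R n m) (c : 'I_m -> nat -> R)
  (Hc : forall t k, (k <= n)%N -> 0 <= c t k) (a : profile G) : feasible a ->
  exists r, opt_cost G c = r%:E /\ 0 <= r <= cost c a.
Proof.
move=> fa.
have h1 : (opt_cost G c <= (cost c a)%:E)%E.
  by apply: ereal_inf_lbound; exists a.
have h2 : (0 <= opt_cost G c)%E.
  apply: le_ereal_inf_tmp => _ [b _ <-]; rewrite lee_fin; exact: cost_ge0.
move: h1 h2; case: (opt_cost G c) => [r| |] //= h1 h2.
by exists r; split => //; rewrite -!lee_fin h1 h2.
Qed.

Lemma ratio_ge (R : realType) (CN CO rho : R) (o : \bar R) :
  0 < rho -> 0 <= CO -> CO < rho * CN -> (exists r, o = r%:E /\ 0 <= r <= CO) ->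
  ((rho^-1)%:E <= CN%:E / o)%E.
Proof.
move=> hr hCO hlt [r [-> /andP[r0 rCO]]].
have CN0 : 0 < CN.
  have : 0 < rho * CN by apply: le_lt_trans hlt.
  by rewrite pmulr_rgt0.
have [->|rne] := eqVneq r 0.
  by rewrite inver eqxx muleC gt0_mulye ?leey // lte_fin.
rewrite inver (negbTE rne) -EFinM lee_fin.
have rp : 0 < r by rewrite lt_neqAle eq_sym rne r0.
rewrite ler_pdivlMr // mulrC ler_pdivrMr //.
apply: ltW; apply: le_lt_trans rCO _; by rewrite mulrC.
Qed.

Lemma game_lb (R : realType) N m (c f : 'I_m -> nat -> R) (t : 'I_m) (th : bool -> R)
  (X Y Z : bool -> nat) (rho : R) :
  (forall t k, (k <= N.+1)%N -> 0 <= c t k) ->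
  (forall b, 0 <= th b) ->
  (forall b, (Z b <= minn (X b) (Y b))%N) -> (forall b, (X b + Y b - Z b <= N.+1)%N) ->
  0 < rho ->
  0 <= \sum_b th b * (((Y b)%:R - (Z b)%:R) * fext N.+1 (f t) (X b).+1
                     - ((X b)%:R - (Z b)%:R) * fext N.+1 (f t) (X b)) ->
  \sum_b th b * (c t (Y b) - rho * c t (X b)) < 0 ->
  ((rho^-1)%:E <= PoA_class N.+1 c f)%E.
Proof.
move=> Hc th0 HZ HN hr HD Hlt.
have HX : forall b, (X b <= N.+1)%N by move=> b; have := HZ b; have := HN b; lia.
set G := @game R N m t th th0 X Y Z.
apply: le_ereal_sup_tmp; exists (PoA_game G c f); first by exists G.
apply: le_ereal_sup_tmp.
exists ((cost (G := G) c [ffun i => Aset X i])%:E / opt_cost G c)%E.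
  by exists [ffun i => Aset X i] => //; apply: game_NE.
have fB : feasible (G := G) [ffun i => Bset X Y Z i].
  by apply/forallP => i; rewrite ffunE /= set22.
apply: (@ratio_ge R _ (cost (G := G) c [ffun i => Bset X Y Z i])).
- exact: hr.
- by apply: cost_ge0 => t0 k hk; apply: Hc.
- rewrite (@costA R N m c t th th0 X Y Z HX) (@costB R N m c t th th0 X Y Z HZ HN).
  rewrite mulrnAr ltr_pMn2r //.
  have E : \sum_b th b * (c t (Y b) - rho * c t (X b)) =
     \sum_b th b * c t (Y b) - rho * \sum_b th b * c t (X b).
    by rewrite mulr_sumr -sumrB; apply: eq_bigr => b _; ring.
  move: Hlt; rewrite E; lra.
- by apply: opt_cost_bounds => // t0 k hk; apply: Hc.
Qed.
Lemma inv_limit (R : realType) (rs : R) (P : \bar R) : 0 <= rs ->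
  (forall rho, rs < rho -> ((rho^-1)%:E <= P)%E) -> (((rs%:E)^-1)%E <= P)%E.
Proof.
move=> rs0 H.
case EP: P => [r| |]; last first.
- have := H (rs + 1) ltac:(lra); rewrite EP leeNy_eq //.
- exact: leey.
have r0 : 0 < r.
  have := H (rs + 1) ltac:(lra); rewrite EP lee_fin => h.
  apply: lt_le_trans h; rewrite invr_gt0; lra.
have [hr|hr] := leP (r^-1) rs.
  have rsp : 0 < rs by apply: lt_le_trans hr; rewrite invr_gt0.
  rewrite inver gt_eqF // lee_fin -(invrK r) lef_pV2 ?posrE ?invr_gt0 //.
set rho := (rs + r^-1) / 2.
have h1 : rs < rho by rewrite /rho; lra.
have h2 : rho < r^-1 by rewrite /rho; lra.
have := H rho h1; rewrite EP lee_fin.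
have rp : 0 < rho by lra.
rewrite -(invrK r) lef_pV2 ?posrE ?invr_gt0 // => h; exfalso; lra.
Qed.
Lemma fextM (R : realType) n (mu : R) (F : nat -> R) k :
  fext n (fun k => mu * F k) k = mu * fext n F k.
Proof. by rewrite /fext; case: ifP => _ //; rewrite mulr0. Qed.

Lemma lower (R : realType) N m (c f : 'I_m -> nat -> R) (t : 'I_m) (fs : nat -> R) (rs : R) :
  (forall t k, (k <= N.+1)%N -> 0 <= c t k) ->
  LP_optimal N.+1 (c t) fs rs ->
  (((rs%:E)^-1)%E <= PoA_class N.+1 c f)%E.
Proof.
move=> Hc [Hf Hopt].
have rs0 : 0 <= rs.
  apply: (Hopt (fun _ => 0) 0) => x y z hI.
  have hy : (y <= N.+1)%N by move: hI; rewrite /in_IR => /and4P[]; lia.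
  have E : forall k, fext N.+1 (fun _ => (0 : R)) k = 0 by move=> k; rewrite /fext; case: ifP.
  by rewrite !E !mulr0 !mul0r !subr0 !addr0; apply: Hc.
apply: inv_limit => // rho hrho.
have rho0 : 0 < rho by lra.
pose K := ('I_N.+2 * 'I_N.+2 * 'I_N.+2)%type.
pose P := fun k : K => in_IR N.+1 k.1.1 k.1.2 k.2.
pose a := fun k : K => c t k.1.2 - rho * c t k.1.1.
pose D := fun k : K => ((k.1.2 : nat)%:R - (k.2 : nat)%:R) * fext N.+1 (f t) (k.1.1 : nat).+1
                      - ((k.1.1 : nat)%:R - (k.2 : nat)%:R) * fext N.+1 (f t) k.1.1.
case: (pselect (exists k1 k2 (t1 t2 : R), [/\ P k1, P k2, 0 <= t1, 0 <= t2 &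
          0 <= t1 * D k1 + t2 * D k2 /\ t1 * a k1 + t2 * a k2 < 0])).
  move=> [k1 [k2 [t1 [t2 [P1 P2 t10 t20 [HD Ha]]]]]].
  pose X := fun b : bool => if b then (k1.1.1 : nat) else (k2.1.1 : nat).
  pose Y := fun b : bool => if b then (k1.1.2 : nat) else (k2.1.2 : nat).
  pose Z := fun b : bool => if b then (k1.2 : nat) else (k2.2 : nat).
  pose th := fun b : bool => if b then t1 else t2.
  apply: (@game_lb R N m c f t th X Y Z rho) => //.
  - by case.
  - by case; [move: P1 | move: P2]; rewrite /P /in_IR /X /Y /Z => /and4P[].
  - by case; [move: P1 | move: P2]; rewrite /P /in_IR /X /Y /Z => /and4P[].
  - by rewrite big_bool.
  - by rewrite big_bool.
move=> Hne.
have Hfk : forall k1 k2 (t1 t2 : R), P k1 -> P k2 -> 0 <= t1 -> 0 <= t2 ->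
     0 <= t1 * D k1 + t2 * D k2 -> 0 <= t1 * a k1 + t2 * a k2.
  move=> k1 k2 t1 t2 P1 P2 t10 t20 HD.
  case: (lerP 0 (t1 * a k1 + t2 * a k2)) => // Ha.
  by exfalso; apply: Hne; exists k1, k2, t1, t2; split.
have [mu [mu0 Hmu]] := farkas2 Hfk.
have : rho <= rs.
  apply: (Hopt (fun k => mu * f t k)) => x y z hI.
  have hx : (x < N.+2)%N by move: hI; rewrite /in_IR => /and4P[]; lia.
  have hy : (y < N.+2)%N by move: hI; rewrite /in_IR => /and4P[]; lia.
  have hz : (z < N.+2)%N by move: hI; rewrite /in_IR => /and4P[]; lia.
  have := Hmu (Ordinal hx, Ordinal hy, Ordinal hz) hI.
  rewrite /a /D /= !fextM.
  suff -> : c t y - rho * c t x + (x%:R - z%:R) * (mu * fext N.+1 (f t) x) -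
     (y%:R - z%:R) * (mu * fext N.+1 (f t) x.+1) =
     c t y - rho * c t x - mu * ((y%:R - z%:R) * fext N.+1 (f t) x.+1 -
     (x%:R - z%:R) * fext N.+1 (f t) x) by [].
  ring.
move=> h; exfalso; lra.
Qed.
Lemma load_dev_gen (R : realType) n m (G : lrag R n m) (a : profile G) i (S : {set res G}) r :
  r \in S -> load (deviate a i S) r = if r \in a i then load a r else (load a r).+1.
Proof.
move=> rS; rewrite /load (cardD1 i) [in RHS](cardD1 i) !inE ffunE eqxx rS /=.
have -> : #|[predD1 [pred i0 | r \in deviate a i S i0] & i]| = #|[predD1 [pred i0 | r \in a i0] & i]|.
  apply: eq_card => j; rewrite !inE ffunE; case: (j =P i) => //=.
by case: (r \in a i).
Qed.

Lemma sum_exchange (R : realType) n m (G : lrag R n m) (a : profile G) (F : res G -> R) :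
  \sum_i \sum_(r in a i) F r = \sum_r F r *+ load a r.
Proof.
rewrite (eq_bigr (fun i => \sum_r (if r \in a i then F r else 0))); last by move=> i _; rewrite big_mkcond.
rewrite exchange_big; apply: eq_bigr => r _.
by rewrite -big_mkcond sumr_const.
Qed.

Lemma sum_exchange_dev (R : realType) n m (G : lrag R n m) (a a' : profile G) (F : res G -> nat -> R) :
  \sum_i \sum_(r in deviate a i (a' i) i) F r (load (deviate a i (a' i)) r) =
  \sum_r (F r (load a r) *+ #|[pred i | (r \in a' i) && (r \in a i)]|
          + F r (load a r).+1 *+ #|[pred i | (r \in a' i) && (r \notin a i)]|).
Proof.
rewrite (eq_bigr (fun i => \sum_r (if r \in a' i then F r (if r \in a i then load a r else (load a r).+1) else 0))); last first.
  move=> i _; rewrite ffunE eqxx big_mkcond; apply: eq_bigr => r _.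
  by case: ifP => // rS; rewrite load_dev_gen.
rewrite exchange_big; apply: eq_bigr => r _.
rewrite -big_mkcond (bigID (fun i => r \in a i)) /=.
congr (_ + _).
  rewrite (eq_bigr (fun _ => F r (load a r))); last by move=> i /andP[_ ->].
  by rewrite sumr_const.
rewrite (eq_bigr (fun _ => F r (load a r).+1)); last by move=> i /andP[_ /negbTE ->].
by rewrite sumr_const.
Qed.

Lemma upper (R : realType) N m (c fs : 'I_m -> nat -> R) (rs : 'I_m -> R) (rmin : R)
  (G : lrag R N.+1 m) :
  (forall t, c t 0 = 0) -> (forall t k, (k <= N.+1)%N -> 0 <= c t k) ->
  (forall t, LP_feasible N.+1 (c t) (fs t) (rs t)) -> (forall t, rmin <= rs t) ->
  forall a : profile G, is_NE fs a -> forall a' : profile G, feasible a' -> rmin * cost c a <= cost c a'.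
Proof.
move=> c0 Hc Hf Hr a [fa Hne] a' fa'.
pose x r := load a r.
pose y r := load a' r.
pose z r := #|[pred i | (r \in a' i) && (r \in a i)]|.
have zy r : #|[pred i | (r \in a' i) && (r \notin a i)]| = (y r - z r)%N.
  have := cardID [pred i | r \in a i] [pred i | r \in a' i].
  have -> : #|[predI [pred i | r \in a' i] & [pred i | r \in a i]]| = z r.
    by apply: eq_card => i; rewrite !inE.
  have -> : #|[predD [pred i | r \in a' i] & [pred i | r \in a i]]| =
            #|[pred i | (r \in a' i) && (r \notin a i)]|.
    by apply: eq_card => i; rewrite !inE andbC.
  by rewrite /y /load => <-; rewrite addKn.
have zxy r : (z r <= minn (x r) (y r))%N.
  rewrite leq_min /z /x /y /load; apply/andP; split; apply: subset_leq_card; apply/fintype.subsetP => i; rewrite !inE => /andP[] //.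
have xyz r : (x r + y r - z r <= N.+1)%N.
  have := cardUI [pred i | r \in a i] [pred i | r \in a' i].
  have -> : #|[predI [pred i | r \in a i] & [pred i | r \in a' i]]| = z r.
    by apply: eq_card => i; rewrite !inE andbC.
  have := max_card [predU [pred i | r \in a i] & [pred i | r \in a' i]]; rewrite card_ord.
  set U := #|_|; move=> hU E; rewrite /x /y /load -E; lia.
have HS : 0 <= \sum_i (agent_cost fs i (deviate a i (a' i)) - agent_cost fs i a).
  apply: sumr_ge0 => i _; rewrite subr_ge0; apply: Hne.
  by move/forallP: fa' => /(_ i).
move: HS; rewrite sumrB /agent_cost.
rewrite (sum_exchange_dev a a' (fun r k => Defs.val r * fs (ty r) k)) sum_exchange -sumrB => HS.
have key : forall r, Defs.val r * fs (ty r) (x r) *+ z r + Defs.val r * fs (ty r) (x r).+1 *+ (y r - z r)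
    - Defs.val r * fs (ty r) (x r) *+ x r <= Defs.val r * (c (ty r) (y r) - rs (ty r) * c (ty r) (x r)).
  move=> r; rewrite (@termwise R N) //.
  rewrite -subr_ge0 -mulrBr; apply: mulr_ge0; first exact: val_ge0.
  have [s0|s1] := posnP (x r + y r - z r)%N.
    have ex : x r = 0%N by have := zxy r; lia.
    have ey : y r = 0%N by have := zxy r; lia.
    have ez : z r = 0%N by have := zxy r; lia.
    rewrite ex ey ez !c0 /fext /=; lra.
  have := LP_I (Hf (ty r)) s1 (xyz r) (zxy r); rewrite /gLP.
  set A := fext _ _ _; set B := fext _ _ _; lra.
have H2 : 0 <= \sum_r Defs.val r * (c (ty r) (y r) - rs (ty r) * c (ty r) (x r)).
  apply: le_trans HS _; apply: ler_sum => r _; rewrite zy; exact: key.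
have H3 : \sum_r rmin * (Defs.val r * c (ty r) (x r)) <= \sum_r Defs.val r * (rs (ty r) * c (ty r) (x r)).
  apply: ler_sum => r _; rewrite mulrCA; apply: ler_wpM2l; first exact: val_ge0.
  apply: ler_wpM2r; [apply: Hc; rewrite /x /load; apply: leq_trans (max_card _) _; by rewrite card_ord | exact: Hr].
move: H2 H3; rewrite /cost -mulr_sumr.
under eq_bigr do rewrite mulrBr.
rewrite sumrB /x /y => h1 h2; lra.
Qed.

Lemma rs_ge0 (R : realType) N (ct : nat -> R) (fs : nat -> R) (rs : R) :
  (forall k, (k <= N.+1)%N -> 0 <= ct k) -> LP_optimal N.+1 ct fs rs -> 0 <= rs.
Proof.
move=> Hc [Hf Hopt].
apply: (Hopt (fun _ => 0) 0) => x y z hI.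
have hy : (y <= N.+1)%N by move: hI; rewrite /in_IR => /and4P[]; lia.
have E : forall k, fext N.+1 (fun _ => (0 : R)) k = 0 by move=> k; rewrite /fext; case: ifP.
by rewrite !E !mulr0 !mul0r !subr0 !addr0; apply: Hc.
Qed.

Lemma upper_class (R : realType) N m (c fs : 'I_m -> nat -> R) (rs : 'I_m -> R) (t0 : 'I_m) :
  (forall t, c t 0 = 0) -> (forall t k, (k <= N.+1)%N -> 0 <= c t k) ->
  (forall t, LP_feasible N.+1 (c t) (fs t) (rs t)) -> (forall t, 0 < rs t) ->
  (PoA_class N.+1 c fs <= \big[Order.max/-oo%E]_(t < m) ((rs t)%:E)^-1)%E.
Proof.
move=> c0 Hc Hf Hpos.
case: (@arg_minP _ _ _ t0 xpredT rs isT) => t1 _ Ht1.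
set rmin := rs t1.
have rmin0 : 0 < rmin := Hpos t1.
apply: (@le_trans _ _ (((rmin%:E)^-1)%E)); last first.
  by apply: (bigmax_sup t1) => //; exact: lexx.
apply: ge_ereal_sup => _ [G ->].
apply: ge_ereal_sup => _ [a NEa <-].
have Hup := @upper R N m c fs rs rmin G c0 Hc Hf (fun t => Ht1 t isT) a NEa.
have [r [Er /andP[r0 rC]]] := opt_cost_bounds Hc NEa.1.
have hr : rmin * cost c a <= r.
  have : ((rmin * cost c a)%:E <= opt_cost G c)%E.
    by apply: le_ereal_inf_tmp => _ [a' fa' <-]; rewrite lee_fin; apply: Hup.
  by rewrite Er lee_fin.
rewrite Er (inver rmin) (gt_eqF rmin0).
have C0 := cost_ge0 Hc a.
have [->|Cne] := eqVneq (cost c a) 0.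
  by rewrite mul0e lee_fin invr_ge0 ltW.
have Cp : 0 < cost c a by rewrite lt_neqAle eq_sym Cne C0.
have rp : 0 < r by apply: lt_le_trans hr; rewrite mulr_gt0.
rewrite (inver r) (gt_eqF rp) -EFinM lee_fin ler_pdivrMr // mulrC ler_pdivlMr //.
by rewrite mulrC.
Qed.

Lemma upper_all (R : realType) N m (c fs : 'I_m -> nat -> R) (rs : 'I_m -> R) (t0 : 'I_m) :
  (forall t, c t 0 = 0) -> (forall t k, (k <= N.+1)%N -> 0 <= c t k) ->
  (forall t, LP_feasible N.+1 (c t) (fs t) (rs t)) -> (forall t, 0 <= rs t) ->
  (PoA_class N.+1 c fs <= \big[Order.max/-oo%E]_(t < m) ((rs t)%:E)^-1)%E.
Proof.
move=> c0 Hc Hf H0.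
case: (pselect (exists t, rs t = 0)) => [[t Ht]|hn]; last first.
  apply: upper_class => // t; rewrite lt_neqAle H0 andbT eq_sym.
  by apply/eqP => e; apply: hn; exists t.
apply: le_trans (leey _) _; apply: (bigmax_sup t) => //.
by rewrite Ht inve0.
Qed.

Unset Implicit Arguments.

Theorem theorem6 (R : realType) (n m : nat) (c : 'I_m -> nat -> R)
    (fstar : 'I_m -> nat -> R) (rhostar : 'I_m -> R) :
  (0 < n)%N -> (0 < m)%N ->
  (forall t, c t 0%N = 0) ->
  (forall t (k : nat), (1 <= k <= n)%N -> 0 < c t k) ->
  (forall t, LP_optimal n (c t) (fstar t) (rhostar t)) ->
  ((forall t (k : nat), (1 <= k <= n)%N -> 0 <= fstar t k) /\
   (forall f : 'I_m -> nat -> R,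
      (forall t (k : nat), (1 <= k <= n)%N -> 0 <= f t k) ->
      (PoA_class n c fstar <= PoA_class n c f)%E)) /\
  PoA_class n c fstar = \big[Order.max/-oo%E]_(t < m) ((rhostar t)%:E)^-1%E.
Proof.
move=> Hn Hm c0 Hcpos Hopt.
destruct n as [|N]; first by [].
have Hc : forall t k, (k <= N.+1)%N -> 0 <= c t k.
  move=> t [|k] hk; first by rewrite c0.
  by apply/ltW/Hcpos; lia.
have rs0 : forall t, 0 <= rhostar t := fun t => rs_ge0 (Hc t) (Hopt t).
have Hup : (PoA_class N.+1 c fstar <= \big[Order.max/-oo%E]_(t < m) ((rhostar t)%:E)^-1)%E.
  exact: (upper_all (Ordinal Hm) c0 Hc (fun t => (Hopt t).1) rs0).
have Hlow : forall f : 'I_m -> nat -> R,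
    (\big[Order.max/-oo%E]_(t < m) ((rhostar t)%:E)^-1 <= PoA_class N.+1 c f)%E.
  move=> f; apply: bigmax_le; first exact: leNye.
  move=> t _; exact: (lower f Hc (Hopt t)).
split; last by apply/le_anti; rewrite Hup Hlow.
split.
  move=> t k hk.
  have hI : in_IR N.+1 k 0 0 by rewrite /in_IR; apply/and4P; split; lia.
  have h := (Hopt t).1 k 0%N 0%N hI.
  have eF : fext N.+1 (fstar t) k = fstar t k by rewrite /fext hk.
  rewrite eF c0 subrr mul0r subr0 in h.
  have hrc : 0 <= rhostar t * c t k by apply: mulr_ge0; [exact: rs0 | apply: Hc; lia].
  have kF : 0 <= k%:R * fstar t k by lra.
  have kp : (0 : R) < k%:R by rewrite ltr0n; lia.
  by rewrite pmulr_rge0 in kF.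
move=> f _; exact: le_trans Hup (Hlow f).
Qed.
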